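(* Let $D\subseteq\mathbb{R}^n$ be a closed convex set containing no line, let $a_1,\dots,a_m\in\mathbb{R}^n$ and $-\infty\le b_i^l\le b_i^u\le+\infty$ for $i\in[m]$, and let $\tilde m\le m$ be the dimension of $\operatorname{span}\{a_1,\dots,a_m\}$. Suppose $\mathcal{H}=D\cap\{x\in\mathbb{R}^n: b_i^l\le\langle a_i,x\rangle\le b_i^u\ \forall i\in[m]\}$ is unbounded. Then every extreme ray of the recession cone $\operatorname{rec}(\mathcal{H})$ is contained in a face of $\operatorname{rec}(D)$ of dimension at most $\tilde m+1$.
   Context: For a closed convex set $D$, its recession cone is $\operatorname{rec}(D)=\{d: x+td\in D\ \forall x\in D,\ t\ge0\}$. A face of a closed convex set $D$ is a convex $F\subseteq D$ such that any segment $[a,b]\subseteq D$ with $(a,b)\cap F\neq\emptyset$ lies in $F$; its dimension is that of its affine hull. An extreme ray of a closed pointed convex cone is a face of it which is a half-line emanating from the origin. *)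

(* Defs.v *)
From HB Require Import structures.
From mathcomp Require Import all_boot all_order all_algebra.
From mathcomp Require Import all_classical all_reals all_analysis.
Set Implicit Arguments. Unset Strict Implicit. Unset Printing Implicit Defensive.
Import Order.TTheory GRing.Theory Num.Theory.
Import numFieldNormedType.Exports.
Local Open Scope classical_set_scope.
Local Open Scope ring_scope.

Section Defs.
Variables (R : realType) (n : nat).
Implicit Types (D F : set 'rV[R]_n).

Definition is_convex_set D : Prop :=
  forall x y t, D x -> D y -> 0 <= t <= 1 -> D ((1 - t) *: x + t *: y).

Definition contains_no_line D : Prop :=
  ~ exists x d : 'rV[R]_n, d != 0 /\ forall t : R, D (x + t *: d).

Definition rec_cone D : set 'rV[R]_n :=
  [set d | forall x, D x -> forall t : R, 0 <= t -> D (x + t *: d)].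

Definition is_face D F : Prop :=
  is_convex_set F /\ F `<=` D /\
  forall a b : 'rV[R]_n,
    (forall t : R, 0 <= t <= 1 -> D (a + t *: (b - a))) ->
    (exists2 t : R, 0 < t < 1 & F (a + t *: (b - a))) ->
    forall t : R, 0 <= t <= 1 -> F (a + t *: (b - a)).

(* the affine hull of F has dimension at most k: the linear span of the
   differences x - y (x, y in F), i.e. the direction space of aff F, is
   contained in the row space of some k x n matrix *)
Definition aff_dim_le F (k : nat) : Prop :=
  exists B : 'M[R]_(k, n), forall x y, F x -> F y -> (x - y <= B)%MS.

Definition is_extreme_ray (C E : set 'rV[R]_n) : Prop :=
  is_face C E /\
  exists d : 'rV[R]_n, d != 0 /\ E = [set t *: d | t in [set t : R | 0 <= t]].

Definition polyhedral_slice m D (A : 'M[R]_(m, n)) (bl bu : 'I_m -> \bar R)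
  : set 'rV[R]_n :=
  [set x | D x /\ forall i : 'I_m,
     (bl i <= (\sum_(j < n) A i j * x 0 j)%:E)%E /\
     ((\sum_(j < n) A i j * x 0 j)%:E <= bu i)%E].

Definition unbounded_set (H : set 'rV[R]_n) : Prop :=
  ~ exists M : R, forall x, H x -> `|x| <= M.

End Defs.

(* Main.v *)
Require Import Defs.
From HB Require Import structures.
From mathcomp Require Import all_boot all_order all_algebra.
From mathcomp Require Import all_classical all_reals all_analysis.
From mathcomp Require Import ring lra.
Import Order.TTheory GRing.Theory Num.Theory.
Import numFieldNormedType.Exports.
Local Open Scope classical_set_scope.
Local Open Scope ring_scope.
From Stdlib Require Import Classical.

Lemma span_mx (R : fieldType) n (S : 'rV[R]_n -> Prop) : S 0 ->
  (forall u v, S u -> S v -> S (u+v)) -> (forall c u, S u -> S (c *: u)) ->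
  exists M : 'M[R]_n, (forall w, (w <= M)%MS -> S w) /\ (forall u, S u -> (u <= M)%MS).
Proof.
move=> S0 SD SZ.
suff H: forall k (M : 'M[R]_n), (n - \rank M <= k)%N -> (forall w, (w <= M)%MS -> S w) ->
  exists M : 'M[R]_n, (forall w, (w <= M)%MS -> S w) /\ (forall u, S u -> (u <= M)%MS).
  apply: (H n 0); first by rewrite leq_subr.
  by move=> w; rewrite submx0 => /eqP ->.
have step : forall M : 'M[R]_n, (forall u, S u -> (u <= M)%MS) \/
    exists u, S u /\ (M < M + u)%MS.
  move=> M; case: (classic (forall u, S u -> (u <= M)%MS)) => [all|]; first by left.
  move=> H; have [u Hu] := not_all_ex_not _ _ H; have [Su nuM0] := imply_to_and _ _ Hu; have nuM : ~~ (u <= M)%MS by apply/negP. right; exists u; split=> //.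
  rewrite ltmxE addsmxSl /=; apply: contra nuM => h.
  by apply: submx_trans h; apply: addsmxSr.
elim=> [|k IH] M hk hM; (case: (step M) => [all|[u [Su lt]]]; first by exists M).
- move: lt; rewrite ltmxErank => /andP [_ lt].
  have := rank_leq_col (M + u)%MS; move: hk; rewrite leqn0 subn_eq0 => hk; move=> h.
  by have := leq_trans lt h; rewrite ltnNge hk.
- apply: (IH (M + u)%MS).
    move: lt; rewrite ltmxErank => /andP [_ lt].
    have := rank_leq_col (M + u)%MS => h.
    move: hk; rewrite leq_subLR => hk; rewrite leq_subLR.
    by apply: (leq_trans hk); rewrite addnS -addSn leq_add2r.
  move=> w /sub_addsmxP [[x y] /= ->]; apply: SD; first by apply: hM; apply: submxMl.
  have /sub_rVP [a ->] : (y *m u <= u)%MS by apply: submxMl.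
  by apply: SZ.
Qed.

Lemma rank_bound (R: fieldType) n m (A : 'M[R]_(m,n)) (d : 'rV_n) (M : 'M[R]_n) :
  (forall w : 'rV_n, (w <= M)%MS -> w *m (trmx A) = 0 -> (w <= d)%MS) -> (\rank M <= (\rank A).+1)%N.
Proof.
move=> h; rewrite -(mxrank_mul_ker M (trmx A)) -addn1 leq_add //.
  by rewrite -(mxrank_tr A) mxrankM_maxr.
apply: leq_trans (rank_leq_row d); apply: mxrankS; apply/row_subP => i.
have := row_sub i (M :&: kermx (trmx A))%MS; rewrite sub_capmx => /andP [h1 /sub_kermxP h2].
exact: h.
Qed.

Lemma pad_mx (R: fieldType) n k (M : 'M[R]_n) : (\rank M <= k)%N -> exists B : 'M[R]_(k, n), (M <= B)%MS.
Proof.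
move=> h; exists (castmx (subnKC h, erefl n) (col_mx (row_base M) 0)).
rewrite (eqmx_cast _ _) -addsmxE; apply: submx_trans (addsmxSl _ _).
by rewrite eq_row_base.
Qed.

Lemma rec_closed (R : realType) n (D : set 'rV[R]_n) x0 d : closed D -> is_convex_set D -> D x0 ->
  (forall s, 0 <= s -> D (x0 + s *: d)) -> rec_cone D d.
Proof.
move=> cD vD Dx0 hs y Dy t t0.
pose u k := y + t *: d + (@harmonic R k) *: (x0 - y).
apply: (@closed_cvg nat _ \oo _ u D cD).
  apply: nearW => k.
  have l0 : 0 < @harmonic R k by apply: harmonic_gt0.
  have l1 : @harmonic R k <= 1 by rewrite /= invf_le1 ?ler1n ?ltr0n.
  have := vD y (x0 + (t / harmonic k) *: d) (harmonic k) Dy (hs _ _).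
  have -> : (1 - harmonic k) *: y + harmonic k *: (x0 + (t / harmonic k) *: d) = u k.
    apply/rowP => j; rewrite /u !mxE; field; by rewrite gt_eqF.
  apply; first by rewrite divr_ge0 // ltW.
  by rewrite ltW // l1.
have -> : u = (cst (y+t*:d)) + (fun k => harmonic k *: (x0 - y)) by apply: funext => k.
have := cvgD (cvg_cst (y + t*:d)) (cvgZr_tmp (a:=x0 - y) (@cvg_harmonic R)).
by rewrite scale0r addr0; apply; apply: nat_filter.
Qed.
Section Cone.
Variables (R : realType) (n : nat) (D : set 'rV[R]_n).
Local Notation C := (rec_cone D).

Lemma rc0 : C 0.
Proof. by move=> x Dx t _; rewrite scaler0 addr0. Qed.

Lemma rcZ w s : C w -> 0 <= s -> C (s *: w).
Proof. by move=> Cw s0 x Dx t t0; rewrite scalerA; apply: Cw => //; rewrite mulr_ge0. Qed.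

Lemma rcD u v : C u -> C v -> C (u + v).
Proof. by move=> Cu Cv x Dx t t0; rewrite scalerDr addrA; apply: Cv => //; apply: Cu. Qed.

Lemma rcconv u v t : C u -> C v -> 0 <= t <= 1 -> C ((1 - t) *: u + t *: v).
Proof.
move=> Cu Cv /andP [t0 t1]; apply: rcD; apply: rcZ => //; by rewrite subr_ge0.
Qed.
End Cone.

Lemma lfD (R : realType) n m (A : 'M[R]_(m, n)) i (x y : 'rV[R]_n) :
  \sum_(j < n) A i j * (x + y) 0 j = \sum_(j < n) A i j * x 0 j + \sum_(j < n) A i j * y 0 j.
Proof. by rewrite -big_split; apply: eq_bigr => j _; rewrite !mxE mulrDr. Qed.

Lemma lfZ (R : realType) n m (A : 'M[R]_(m, n)) i c (x : 'rV[R]_n) :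
  \sum_(j < n) A i j * (c *: x) 0 j = c * \sum_(j < n) A i j * x 0 j.
Proof. by rewrite mulr_sumr; apply: eq_bigr => j _; rewrite !mxE mulrCA. Qed.

Theorem lemma2 (R : realType) (n m : nat) (D : set 'rV[R]_n)
  (A : 'M[R]_(m, n)) (bl bu : 'I_m -> \bar R) :
  closed D -> is_convex_set D -> contains_no_line D ->
  (forall i, (bl i <= bu i)%E) ->
  unbounded_set (polyhedral_slice D A bl bu) ->
  forall E : set 'rV[R]_n,
    is_extreme_ray (rec_cone (polyhedral_slice D A bl bu)) E ->
    exists F : set 'rV[R]_n,
      is_face (rec_cone D) F /\ E `<=` F /\ aff_dim_le F (\rank A).+1.
Proof.
move=> cD vD _ _ hunb E [hface [d [dnz hE]]].
set H := polyhedral_slice D A bl bu.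
set C := rec_cone D.
have [x0 Hx0] : exists x0, H x0.
  apply: NNPP => hne; apply: hunb; exists 0 => x Hx; exfalso; apply: hne; by exists x.
have dE : E d.
  by rewrite hE; exists 1 => /=; rewrite ?scale1r ?ler01.
have dH : rec_cone H d by case: hface => _ [] /(_ d dE).
have dC : C d.
  apply: (@rec_closed R n D x0 d cD vD); first by case: Hx0.
  by move=> s s0; case: (dH x0 Hx0 s s0).
have keyH : forall w l, 0 <= l -> C w ->
    (forall i, \sum_(j < n) A i j * w 0 j = l * \sum_(j < n) A i j * d 0 j) -> rec_cone H w.
  move=> w l l0 Cw hw x Hx t t0; split; first by apply: Cw => //; case: Hx.
  move=> i; case: (dH x Hx (t * l) (mulr_ge0 t0 l0)) => _ /(_ i).
  by rewrite !lfD !lfZ hw mulrA.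
pose F := [set y | C y /\ exists2 l, 0 <= l & C (l *: d - y)].
pose S := fun u : 'rV[R]_n => exists2 l, 0 <= l & C (l *: d + u) /\ C (l *: d - u).
have SF : forall x y, F x -> F y -> S (x - y).
  move=> x y [Cx [lx lx0 hx]] [Cy [ly ly0 hy]]; exists (lx + ly); first by rewrite addr_ge0.
  split.
    have -> : (lx + ly) *: d + (x - y) = x + (ly *: d - y) + lx *: d.
      by apply/rowP => j; rewrite !mxE; ring.
    by apply: rcD; [apply: rcD|apply: rcZ].
  have -> : (lx + ly) *: d - (x - y) = (lx *: d - x) + y + ly *: d.
    by apply/rowP => j; rewrite !mxE; ring.
  by apply: rcD; [apply: rcD|apply: rcZ].
have [M [MS SM]] : exists M : 'M[R]_n, (forall w, (w <= M)%MS -> S w) /\ (forall u, S u -> (u <= M)%MS).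
  apply: span_mx.
  - by exists 0; rewrite // scale0r subr0 add0r; split; apply: rc0.
  - move=> u v [lu lu0 [hu1 hu2]] [lv lv0 [hv1 hv2]]; exists (lu + lv); first by rewrite addr_ge0.
    split.
      have -> : (lu + lv) *: d + (u + v) = (lu *: d + u) + (lv *: d + v).
        by apply/rowP => j; rewrite !mxE; ring.
      exact: rcD.
    have -> : (lu + lv) *: d - (u + v) = (lu *: d - u) + (lv *: d - v).
      by apply/rowP => j; rewrite !mxE; ring.
    exact: rcD.
  - move=> c u [l l0 [h1 h2]]; have [c0|c0] := lerP 0 c.
      exists (c * l); first by rewrite mulr_ge0.
      split.
        have -> : (c * l) *: d + c *: u = c *: (l *: d + u).
          by apply/rowP => j; rewrite !mxE; ring.
        exact: rcZ.
      have -> : (c * l) *: d - c *: u = c *: (l *: d - u).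
        by apply/rowP => j; rewrite !mxE; ring.
      exact: rcZ.
    have c0' : 0 <= - c by rewrite oppr_ge0 ltW.
    exists (- c * l); first by rewrite mulr_ge0.
    split.
      have -> : (- c * l) *: d + c *: u = (- c) *: (l *: d - u).
        by apply/rowP => j; rewrite !mxE; ring.
      exact: rcZ.
    have -> : (- c * l) *: d - c *: u = (- c) *: (l *: d + u).
      by apply/rowP => j; rewrite !mxE; ring.
    exact: rcZ.
have rk : (\rank M <= (\rank A).+1)%N.
  apply: (@rank_bound R n m A d M) => w /MS [l l0 [h1 h2]] hw.
  have hw0 : forall i, \sum_(j < n) A i j * w 0 j = 0.
    move=> i; have := congr1 (fun N : 'M[R]_(1, m) => N 0 i) hw; rewrite !mxE => h; rewrite -[RHS]h.
    by apply: eq_bigr => j _; rewrite !mxE mulrC.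
  have seg : forall t, 0 <= t <= 1 ->
      rec_cone H ((l *: d - w) + t *: ((l *: d + w) - (l *: d - w))).
    move=> t t01; apply: (keyH _ l l0).
      have -> : (l *: d - w) + t *: ((l *: d + w) - (l *: d - w)) =
                (1 - t) *: (l *: d - w) + t *: (l *: d + w).
        by apply/rowP => j; rewrite !mxE; ring.
      exact: rcconv.
    move=> i.
    have -> : (l *: d - w) + t *: ((l *: d + w) - (l *: d - w)) = l *: d + (2 * t - 1) *: w.
      by apply/rowP => j; rewrite !mxE; ring.
    by rewrite lfD !lfZ hw0 mulr0 addr0.
  have hmid : exists2 t : R, 0 < t < 1 & E (l *: d - w + t *: (l *: d + w - (l *: d - w))).
    exists (1/2); first by apply/andP; split; lra.
    rewrite hE; exists l => //.
    by apply/rowP => j; rewrite !mxE; field.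
  have t1 : 0 <= (1:R) <= 1 by rewrite ler01 lexx.
  have := hface.2.2 _ _ seg hmid 1 t1; rewrite hE; case.
  move=> s _ hs; apply/sub_rVP; exists (s - l).
  by apply/rowP => j; have := congr1 (fun N : 'rV_n => N 0 j) hs; rewrite !mxE mulrBl => ->; ring.
have [B MB] := @pad_mx R n (\rank A).+1 M rk.
exists F; split; last split.
- split.
    move=> x y t [Cx [lx lx0 hx]] [Cy [ly ly0 hy]] t01; split; first exact: rcconv.
    exists (lx + ly); first by rewrite addr_ge0.
    have -> : (lx + ly) *: d - ((1 - t) *: x + t *: y) =
        (1 - t) *: (ly *: d + (lx *: d - x)) + t *: (lx *: d + (ly *: d - y)).
      by apply/rowP => j; rewrite !mxE; ring.
    by apply: rcconv => //; apply: rcD => //; apply: rcZ.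
  split; first by move=> y [].
  move=> a b hseg [t0 /andP [t00 t01] [Cp [l0 l00 hp]]] t t01'.
  split; first exact: hseg.
  have Ca : C a by have := hseg 0; rewrite scale0r addr0; apply; apply/andP; split; lra.
  have Cb : C b by have := hseg 1; rewrite scale1r addrC subrK; apply; apply/andP; split; lra.
  have ha : C ((l0 / (1 - t0)) *: d - a).
    have -> : (l0 / (1 - t0)) *: d - a = (1 - t0)^-1 *: (l0 *: d - (a + t0 *: (b - a)) + t0 *: b).
      by apply/rowP => j; rewrite !mxE; field; rewrite subr_eq0 gt_eqF.
    by apply: rcZ; [apply: rcD => //; apply: rcZ => //; rewrite ltW|rewrite invr_ge0 subr_ge0 ltW].
  have hb : C ((l0 / t0) *: d - b).
    have -> : (l0 / t0) *: d - b = t0^-1 *: (l0 *: d - (a + t0 *: (b - a)) + (1 - t0) *: a).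
      by apply/rowP => j; rewrite !mxE; field; rewrite gt_eqF.
    by apply: rcZ; [apply: rcD => //; apply: rcZ => //; rewrite subr_ge0 ltW|rewrite invr_ge0 ltW].
  have g1 : 0 <= l0 / (1 - t0) by rewrite divr_ge0 // subr_ge0 ltW.
  have g2 : 0 <= l0 / t0 by rewrite divr_ge0 // ltW.
  exists (l0 / (1 - t0) + l0 / t0); first by rewrite addr_ge0.
  have -> : (l0 / (1 - t0) + l0 / t0) *: d - (a + t *: (b - a)) =
     (1 - t) *: ((l0 / t0) *: d + ((l0 / (1 - t0)) *: d - a)) +
      t *: ((l0 / (1 - t0)) *: d + ((l0 / t0) *: d - b)).
    by apply/rowP => j; rewrite !mxE; ring.
  by apply: rcconv => //; apply: rcD => //; apply: rcZ.
- move=> y; rewrite hE => -[s s0 <-]; split; first exact: rcZ.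
  by exists s => //; rewrite subrr; apply: rc0.
- by exists B => x y Fx Fy; apply: submx_trans (MB); apply: SM; apply: SF.
Qed.
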